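(* Let $\mathcal G=(G_n)_{n\in\mathbb N}=((V_n,E_n))_{n\in\mathbb N}$ be an expander sequence. Let $\varepsilon>0$ and let $(\tilde G_n)$ be such that each $\tilde G_n$ is obtained from $G_n$ by deleting edges such that each vertex keeps at least a $(1/2+\varepsilon)$ fraction of its edges. Let $A_n\subseteq V_n$ with $|A_n|=o(n)$. (a) There is $B_n\subseteq A_n$ with $|B_n|=(1-o(1))|A_n|$ such that for all $u\in B_n$, $\frac{|N_{\tilde G_n}(u)\cap A_n|}{|N_{\tilde G_n}(u)|}=o(1)$. (b) There is $B_n\subseteq V_n\setminus A_n$ with $|V_n\setminus(A_n\cup B_n)|=o(|A_n|)$ such that for all $v\in B_n$, $\frac{|N_{\tilde G_n}(v)\cap A_n|}{|N_{\tilde G_n}(v)|}=o(1)$.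
   Context: An expander sequence is a sequence $(G_n)$ of connected graphs, $G_n$ on $n$ vertices with minimum degree $\delta_n$, maximum degree $\Delta_n$, and $\lambda_n=\max\{|\mu_2|,|\mu_n|\}$ (adjacency eigenvalues $\mu_1\ge\dots\ge\mu_n$), such that $\Delta_n/\delta_n=1+o(1)$ and $\lambda_n=o(\Delta_n)$. ''Keeps at least a $(1/2+\varepsilon)$ fraction'' means $d_{\tilde G_n}(v)\ge(1/2+\varepsilon)d_{G_n}(v)$. $N_{\tilde G_n}(u)$ is the neighbourhood of $u$ in $\tilde G_n$. Asymptotic notation is as $n\to\infty$; the $o(1)$ bounds on the ratios hold uniformly over the vertices of $B_n$. *)

(* Defs.v *)
From HB Require Import structures.
From mathcomp Require Import all_boot all_order all_algebra.
From mathcomp Require Import reals.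
Set Implicit Arguments. Unset Strict Implicit. Unset Printing Implicit Defensive.
Import Order.TTheory GRing.Theory Num.Theory.
Local Open Scope ring_scope.

Definition simple_graph n (e : rel 'I_n) : Prop :=
  (forall x y, e x y = e y x) /\ (forall x, ~~ e x x).

Definition connected_graph n (e : rel 'I_n) : Prop :=
  forall x y, connect e x y.

Definition nbh n (e : rel 'I_n) (x : 'I_n) : {set 'I_n} := [set y | e x y].
Definition deg n (e : rel 'I_n) (x : 'I_n) : nat := #|nbh e x|.

(* minimum / maximum degree (0 on the empty graph) *)
Definition maxdeg n (e : rel 'I_n) : nat := \max_(x : 'I_n) deg e x.

Definition mindeg n (e : rel 'I_n) : nat :=
  \big[minn/maxdeg e]_(x : 'I_n) deg e x.

Definition adjmx (R : pzRingType) n (e : rel 'I_n) : 'M[R]_n :=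
  \matrix_(i, j) (e i j)%:R.

(* s is the list of eigenvalues (with multiplicity) of A, in non-increasing
   order mu_1 >= mu_2 >= ... >= mu_n, i.e. char_poly A = prod (X - mu_i). *)
Definition spectrum (R : realDomainType) n (A : 'M[R]_n) (s : seq R) : Prop :=
  sorted (fun x y => y <= x) s /\ char_poly A = \prod_(x <- s) ('X - x%:P).

(* lambda = max(|mu_2|, |mu_n|) *)
Definition lam_of (R : realDomainType) n (s : seq R) : R :=
  Num.max `|s`_1| `|s`_n.-1|.

(* "f n <= eps * g n eventually, for every eps > 0", i.e. f = o(g) for
   nonnegative f, g *)
Definition little_o (R : realDomainType) (f g : nat -> R) : Prop :=
  forall eps : R, 0 < eps -> exists N, forall n, (N <= n)%N -> f n <= eps * g n.

Definition expander_seq (R : realType) (e : forall n, rel 'I_n) : Prop :=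
  (forall n, simple_graph (e n)) /\
  (forall n, connected_graph (e n)) /\
  (forall eps : R, 0 < eps -> exists N, forall n, (N <= n)%N ->
       `| (maxdeg (e n))%:R / (mindeg (e n))%:R - 1 | <= eps) /\
  (exists s : forall n, seq R,
      (forall n, spectrum (adjmx R (e n)) (s n)) /\
      little_o (fun n => lam_of n (s n)) (fun n => (maxdeg (e n))%:R)).

(* Main.v *)
Require Import Defs.
From Stdlib Require Import IndefiniteDescription.
From HB Require Import structures.
From mathcomp Require Import all_boot all_order all_algebra.
From mathcomp Require Import reals complex ring lra.
Set Implicit Arguments. Unset Strict Implicit. Unset Printing Implicit Defensive.
Import Order.TTheory GRing.Theory Num.Theory.
Local Open Scope ring_scope.


Lemma char_poly_sim (F : comNzRingType) n (Q B P : 'M[F]_n) :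
  Q *m P = 1%:M -> char_poly (Q *m B *m P) = char_poly B.
Proof.
move=> QP; rewrite /char_poly /char_poly_mx.
have -> : 'X%:M - map_mx polyC (Q *m B *m P) =
   map_mx polyC Q *m ('X%:M - map_mx polyC B) *m map_mx polyC P.
  rewrite mulmxBr mulmxBl !map_mxM; congr (_ - _).
  by rewrite -mulmxA -scalar_mxC mulmxA -map_mxM QP map_mx1 mul1mx.
rewrite !det_mulmx mulrC mulrA -det_mulmx -map_mxM.
by rewrite (mulmx1C QP) map_mx1 det1 mul1r.
Qed.

Section S.
Variable R : realType.
Local Notation C := (R[i]).
Local Open Scope complex_scope.
Local Open Scope sesquilinear_scope.
Variable n : nat.
Variable A : 'M[R]_n.
Hypothesis Asym : A^T = A.
Let Mc : 'M[C]_n := map_mx (real_complex R) A.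
Let P := spectralmx Mc.
Let D := spectral_diag Mc.

Lemma Mc_herm : Mc \is hermsymmx.
Proof.
apply/is_hermitianmxP; rewrite expr0 scale1r; apply/matrixP => i j.
rewrite !mxE /=.
have -> : A j i = A i j by rewrite -{1}Asym mxE.
exact: (esym (conjc_real _)).
Qed.

Lemma PPt : P *m P^t* = 1%:M.
Proof. exact/unitarymxP/spectral_unitarymx. Qed.
Lemma PtP : P^t* *m P = 1%:M.
Proof. exact/mulmx1C/PPt. Qed.

Lemma Mc_eq : Mc = P^t* *m diag_mx D *m P.
Proof.
have /orthomx_spectralP := hermitian_normalmx Mc_herm.
by rewrite invmx_unitary ?spectral_unitarymx.
Qed.

Lemma D_real i : D 0 i = (@complex.Re R (D 0 i))%:C.
Proof.
have /mxOverP/(_ 0 i) := hermitian_spectral_diag_real Mc_herm.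
by case: (D 0 i) => a b; rewrite complex_real => /eqP -> .
Qed.

Lemma diagE : P *m Mc *m P^t* = diag_mx D.
Proof.
by rewrite Mc_eq !mulmxA PPt mul1mx -mulmxA PPt mulmx1.
Qed.

Lemma charE : char_poly Mc = \prod_(i < n) ('X - (D 0 i)%:P).
Proof.
rewrite Mc_eq char_poly_sim ?PtP // char_poly_trig ?diag_mx_is_trig //.
by apply: eq_bigr => i _; rewrite mxE eqxx mulr1n.
Qed.

Lemma Re_sum I (r : seq I) (Pp : pred I) (F : I -> C) :
  complex.Re (\sum_(i <- r | Pp i) F i) = \sum_(i <- r | Pp i) complex.Re (F i).
Proof. by apply: (big_morph (@complex.Re R)) => // -[a b] [c d]. Qed.

Let pr := \matrix_(i, j) complex.Re (P i j).
Let pi := \matrix_(i, j) complex.Im (P i j).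
Let d i := complex.Re (D 0 i).

Lemma E1 j k : A j k = \sum_i d i * (pr i j * pr i k + pi i j * pi i k).
Proof.
have := congr1 (fun M : 'M[C]_n => complex.Re (M j k)) Mc_eq.
rewrite /= [in X in X = _]mxE /= => ->.
rewrite mxE Re_sum; apply: eq_bigr => i _.
rewrite mul_mx_diag !mxE D_real /d.
case: (P i j) => a b; case: (P i k) => c e; case: (D 0 i) => f g /=.
ring.
Qed.

Lemma E2 j k : ((j == k)%:R : R) = \sum_i (pr i j * pr i k + pi i j * pi i k).
Proof.
have := congr1 (fun M : 'M[C]_n => complex.Re (M j k)) PtP.
rewrite /= [in X in X = _]mxE Re_sum !mxE => h.
have -> : ((j == k)%:R : R) = complex.Re ((j == k)%:R : C) by case: (j == k).
rewrite -h.
apply: eq_bigr => i _; rewrite !mxE.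
case: (P i j) => a b; case: (P i k) => c e /=; ring.
Qed.

Lemma E3 i : \sum_j (pr i j ^+ 2 + pi i j ^+ 2) = 1.
Proof.
have := congr1 (fun M : 'M[C]_n => complex.Re (M i i)) PPt.
rewrite /= [in X in X = _]mxE Re_sum !mxE eqxx mulr1n => h.
have -> : (1 : R) = complex.Re (1 : C) by []. rewrite -h.
apply: eq_bigr => j _; rewrite !mxE.
case: (P i j) => a b /=; ring.
Qed.

Lemma E5 i : d i = \sum_j \sum_k A j k * (pr i j * pr i k + pi i j * pi i k).
Proof.
have := congr1 (fun M : 'M[C]_n => complex.Re (M i i)) diagE.
rewrite /= [in X in _ = X]mxE /= eqxx mulr1n /d => <-.
rewrite mxE Re_sum exchange_big; apply: eq_bigr => k _.
rewrite !mxE big_distrl Re_sum; apply: eq_bigr => j _.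
rewrite !mxE.
case: (P i j) => a b; case: (P i k) => c e /=; ring.
Qed.

Lemma E4 (s : seq R) : char_poly A = \prod_(x <- s) ('X - x%:P) ->
  perm_eq s [seq d i | i <- enum 'I_n].
Proof.
move=> cA.
have h : char_poly Mc = \prod_(x <- s) ('X - (x%:C)%:P).
  by rewrite -map_char_poly cA map_prod_XsubC.
rewrite charE in h.
apply: (@perm_map_inj _ _ (real_complex R)); first by move=> x y [].
apply: prod_XsubC_eq.
rewrite big_map -h -map_comp big_map big_enum /=.
by apply: eq_bigr => i _; rewrite -D_real.
Qed.
End S.

Lemma real_spectral (R : realType) n (A : 'M[R]_n) (s : seq R) :
  A^T = A -> char_poly A = \prod_(x <- s) ('X - x%:P) ->
  exists (pr pi : 'M[R]_n) (d : 'I_n -> R),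
   [/\ (forall j k, A j k = \sum_i d i * (pr i j * pr i k + pi i j * pi i k)),
       (forall j k, ((j == k)%:R : R) = \sum_i (pr i j * pr i k + pi i j * pi i k)),
       (forall i, \sum_j (pr i j ^+ 2 + pi i j ^+ 2) = 1),
       (forall i, d i = \sum_j \sum_k A j k * (pr i j * pr i k + pi i j * pi i k)) &
       perm_eq s [seq d i | i <- enum 'I_n]].
Proof.
move=> As cA; do 3 eexists; split.
- exact: E1 As.
- exact: E2.
- exact: E3.
- exact: E5.
- exact: E4 cA.
Qed.

Lemma count2 (T : eqType) (P : pred T) (r : seq T) a b :
  uniq r -> a \in r -> b \in r -> a != b -> P a -> P b -> (2 <= count P r)%N.
Proof.
move=> ur ar br ab Pa Pb.
rewrite -size_filter.
have -> : 2%N = size [:: a; b] by [].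
apply: uniq_leq_size; first by rewrite /= inE ab.
by move=> x; rewrite !inE => /orP[] /eqP ->; rewrite mem_filter ?Pa ?Pb.
Qed.

Lemma top_index (R : realDomainType) n (d : 'I_n -> R) (s : seq R) :
  (0 < n)%N -> sorted (fun x y => y <= x) s ->
  perm_eq s [seq d i | i <- enum 'I_n] ->
  exists i0 : 'I_n, forall i, i != i0 -> `|d i| <= lam_of n s.
Proof.
move=> n0 ss ps.
have sz : size s = n by rewrite (perm_size ps) size_map size_enum_ord.
have tr : transitive (fun x y : R => y <= x).
  by move=> y x z h1 h2; apply: le_trans h2 h1.
have hk : forall k, (1 <= k < n)%N -> `|s`_k| <= lam_of n s.
  move=> k /andP[k1 kn].
  have h1 : s`_k <= s`_1.
    apply: (sorted_leq_nth tr (fun x => lexx x) 0 ss); rewrite ?inE ?sz //.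
    exact: (leq_ltn_trans k1 kn).
  have h2 : s`_n.-1 <= s`_k.
    apply: (sorted_leq_nth tr (fun x => lexx x) 0 ss); rewrite ?inE ?sz //.
    - by rewrite prednK.
    - by rewrite -ltnS prednK.
  rewrite /lam_of le_max.
  case: (lerP 0 (s`_k)) => sk.
    by rewrite ger0_norm // (le_trans h1 (ler_norm _)).
  rewrite ltr0_norm //; apply/orP; right.
  apply: (@le_trans _ _ (- s`_n.-1)); first by rewrite lerN2.
  by rewrite -normrN ler_norm.
have s0 : s`_0 \in s by rewrite mem_nth // sz.
have := s0; rewrite (perm_mem ps) => /mapP [i0 _ di0].
exists i0 => i ii0.
have dis : d i \in s by rewrite (perm_mem ps) map_f // mem_enum.
set k := index (d i) s.
have kn : (k < n)%N by rewrite -sz index_mem.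
have dk : d i = s`_k by rewrite nth_index.
case: (posnP k) => [k0|kp]; last by rewrite dk hk // kp.
have x0 : d i = s`_0 by rewrite dk k0.
have c2 : (2 <= count_mem (s`_0)%R s)%N.
  rewrite (permP ps) count_map.
  apply: (count2 (a := i) (b := i0)); rewrite ?enum_uniq ?mem_enum //=.
  - by rewrite x0.
  - by rewrite di0.
rewrite x0; move: c2 sz hk; clear -n0; case: s => [|x t] //= c2 sz hk.
rewrite eqxx add1n ltnS -has_count has_pred1 in c2.
have := hk (index x t).+1; rewrite /= nth_index // => -> //.
by rewrite -sz ltnS index_mem.
Qed.

Section RealH.
Variable R : realFieldType.

Lemma amgm2 (t a b c d : R) : 0 < t ->
  2 * `|a * b + c * d| <= t * (a ^+ 2 + c ^+ 2) + (b ^+ 2 + d ^+ 2) / t.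
Proof.
move=> t0.
set S := t * _ + _.
have h1 : S - 2 * (a * b + c * d) = ((t * a - b) ^+ 2 + (t * c - d) ^+ 2) / t.
  rewrite /S; field; by rewrite gt_eqF.
have h2 : S + 2 * (a * b + c * d) = ((t * a + b) ^+ 2 + (t * c + d) ^+ 2) / t.
  rewrite /S; field; by rewrite gt_eqF.
have p1 : 0 <= S - 2 * (a * b + c * d).
  rewrite h1; apply: divr_ge0; [apply: addr_ge0; apply: sqr_ge0 | exact: ltW].
have p2 : 0 <= S + 2 * (a * b + c * d).
  rewrite h2; apply: divr_ge0; [apply: addr_ge0; apply: sqr_ge0 | exact: ltW].
have : `|2 * (a * b + c * d)| <= S by rewrite ler_norml; apply/andP; split; lra.
by rewrite normrM normr_nat.
Qed.

Lemma cs_sum (I : finType) (X : pred I) (f : I -> R) :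
  (\sum_(j in X) f j) ^+ 2 <= #|X|%:R * \sum_(j in X) f j ^+ 2.
Proof.
set S := \sum_(j in X) f j.
have h : 0 <= \sum_(j in X) (#|X|%:R * f j - S) ^+ 2.
  by apply: sumr_ge0 => j _; rewrite sqr_ge0.
have e : \sum_(j in X) (#|X|%:R * f j - S) ^+ 2 =
   #|X|%:R * (#|X|%:R * \sum_(j in X) f j ^+ 2 - S ^+ 2).
  have -> : \sum_(j in X) (#|X|%:R * f j - S) ^+ 2 =
     \sum_(j in X) (#|X|%:R ^+ 2 * f j ^+ 2 + ((- (2 * #|X|%:R * S)) * f j + S ^+ 2)).
    by apply: eq_bigr => j _; ring.
  rewrite big_split big_split /= -!mulr_sumr sumr_const /S -/S.
  rewrite -mulr_natr; ring.
have hc : 0 <= #|X|%:R :> R by [].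
rewrite e in h.
case: (posnP #|X|) => [c0|cp].
  rewrite /S (eq_bigl _ _ (card0_eq c0)) big_pred0 //.
  by rewrite c0 mul0r expr0n.
by move: h; rewrite pmulr_rge0 ?ltr0n // subr_ge0.
Qed.

Lemma sum_sub_le (I : finType) (X : pred I) (g : I -> R) :
  (forall j, 0 <= g j) -> \sum_(j in X) g j <= \sum_j g j.
Proof.
move=> g0; rewrite [X in X <= _]big_mkcond /=; apply: ler_sum => j _.
by case: (j \in X).
Qed.

Lemma rl (I : finType) (X : pred I) (a : I -> R) : (0 < #|I|)%N ->
  (\sum_(j in X) a j) ^+ 2 <=
   2 * #|X|%:R ^+ 2 * (\sum_j a j) ^+ 2 / #|I|%:R ^+ 2 +
   2 * #|X|%:R * (\sum_j a j ^+ 2 - (\sum_j a j) ^+ 2 / #|I|%:R).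
Proof.
move=> N0.
have Nn : #|I|%:R != 0 :> R by rewrite pnatr_eq0 -lt0n.
set N := #|I|%:R; set Sa := \sum_j a j; set b := Sa / N.
have e1 : \sum_(j in X) a j = #|X|%:R * b + \sum_(j in X) (a j - b).
  by rewrite sumrB sumr_const -mulr_natl; ring.
have e2 : \sum_j (a j - b) ^+ 2 = \sum_j a j ^+ 2 - Sa ^+ 2 / N.
  have -> : \sum_j (a j - b) ^+ 2 = \sum_j (a j ^+ 2 + (- (2 * b) * a j + b ^+ 2)).
    by apply: eq_bigr => j _; ring.
  rewrite big_split big_split /= -mulr_sumr sumr_const -mulr_natl -/Sa -/N /b.
  field; exact: Nn.
set v := \sum_(j in X) (a j - b).
have hv : v ^+ 2 <= #|X|%:R * (\sum_j a j ^+ 2 - Sa ^+ 2 / N).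
  apply: (le_trans (cs_sum X (fun j => a j - b))).
  rewrite -e2; apply: ler_wpM2l => //; apply: sum_sub_le => j; exact: sqr_ge0.
rewrite e1.
have hsq : forall u w : R, (u + w) ^+ 2 <= 2 * u ^+ 2 + 2 * w ^+ 2.
  move=> u w; rewrite -subr_ge0.
  have -> : 2 * u ^+ 2 + 2 * w ^+ 2 - (u + w) ^+ 2 = (u - w) ^+ 2 by ring.
  exact: sqr_ge0.
apply: le_trans (hsq _ _) _.
have -> : 2 * (#|X|%:R * b) ^+ 2 = 2 * #|X|%:R ^+ 2 * Sa ^+ 2 / N ^+ 2.
  rewrite /b; field; exact: Nn.
rewrite lerD2l.
have -> : 2 * #|X|%:R * (\sum_j a j ^+ 2 - Sa ^+ 2 / N) =
   2 * (#|X|%:R * (\sum_j a j ^+ 2 - Sa ^+ 2 / N)) by ring.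
by rewrite ler_pM2l.
Qed.
Lemma sum_subP_le (I : finType) (P : pred I) (g : I -> R) :
  (forall j, 0 <= g j) -> \sum_(j | P j) g j <= \sum_j g j.
Proof.
move=> g0; rewrite [X in X <= _]big_mkcond /=; apply: ler_sum => j _.
by case: (P j).
Qed.
End RealH.

Section Core.
Variable R : realType.
Variable n : nat.
Variable e : rel 'I_n.
Hypothesis Hsg : simple_graph e.
Variables (pr pi : 'M[R]_n) (d : 'I_n -> R).
Local Notation a j k := ((e j k)%:R : R).
Hypothesis E1 : forall j k, a j k = \sum_i d i * (pr i j * pr i k + pi i j * pi i k).
Hypothesis E2 : forall j k, ((j == k)%:R : R) = \sum_i (pr i j * pr i k + pi i j * pi i k).
Hypothesis E3 : forall i, \sum_j (pr i j ^+ 2 + pi i j ^+ 2) = 1.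
Hypothesis E5 : forall i, d i = \sum_j \sum_k a j k * (pr i j * pr i k + pi i j * pi i k).

Definition Zr i (x : 'I_n -> R) := \sum_j x j * pr i j.
Definition Zi i (x : 'I_n -> R) := \sum_j x j * pi i j.
Definition Nn i x := Zr i x ^+ 2 + Zi i x ^+ 2.

Lemma bil (w : 'I_n -> R) (c : 'I_n -> 'I_n -> R) x y :
  (forall j k, c j k = \sum_i w i * (pr i j * pr i k + pi i j * pi i k)) ->
  \sum_j \sum_k x j * c j k * y k = \sum_i w i * (Zr i x * Zr i y + Zi i x * Zi i y).
Proof.
move=> hc.
have -> : \sum_i w i * (Zr i x * Zr i y + Zi i x * Zi i y) =
   \sum_i \sum_j \sum_k x j * (w i * (pr i j * pr i k + pi i j * pi i k)) * y k.
  apply: eq_bigr => i _.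
  rewrite /Zr /Zi !big_distrl /= -big_split mulr_sumr; apply: eq_bigr => j _.
  rewrite !big_distrr -big_split mulr_sumr; apply: eq_bigr => k _ /=.
  ring.
rewrite [RHS]exchange_big; apply: eq_bigr => j _.
rewrite [RHS]exchange_big; apply: eq_bigr => k _.
by rewrite hc big_distrr big_distrl.
Qed.

Definition Q x y := \sum_j \sum_k x j * a j k * y k.

Lemma Qform x y : Q x y = \sum_i d i * (Zr i x * Zr i y + Zi i x * Zi i y).
Proof. exact: bil. Qed.

Lemma Pars x : \sum_j x j ^+ 2 = \sum_i Nn i x.
Proof.
have hc : forall j k, ((j == k)%:R : R) =
    \sum_i (fun _ => 1) i * (pr i j * pr i k + pi i j * pi i k).
  by move=> j k; rewrite E2; apply: eq_bigr => i _; rewrite mul1r.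
have H := @bil (fun _ => 1) (fun j k => (j == k)%:R) x x hc.
have -> : \sum_i Nn i x = \sum_i 1 * (Zr i x * Zr i x + Zi i x * Zi i x).
  by apply: eq_bigr => i _; rewrite mul1r /Nn !expr2.
rewrite -H; apply: eq_bigr => j _.
rewrite (bigD1 j) //= eqxx mulr1 big1 ?addr0 ?expr2 // => k kj.
by rewrite eq_sym (negbTE kj) mulr0 mul0r.
Qed.

Lemma deg_sum j : ((deg e j)%:R : R) = \sum_k a j k.
Proof.
rewrite /deg -sum1_card natr_sum [LHS]big_mkcond /=.
by apply: eq_bigr => k _; rewrite /nbh inE; case: (e j k).
Qed.

Lemma deg_le_max j : ((deg e j)%:R : R) <= (maxdeg e)%:R.
Proof. by rewrite ler_nat /maxdeg (leq_bigmax j). Qed.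

Lemma deg_ge_min j : ((mindeg e)%:R : R) <= (deg e j)%:R.
Proof.
rewrite ler_nat /mindeg.
have : j \in index_enum 'I_n by rewrite mem_index_enum.
elim: (index_enum 'I_n) => [//|b r IH]; rewrite inE big_cons => /orP[/eqP <-|jr].
  exact: geq_minl.
exact: leq_trans (geq_minr _ _) (IH jr).
Qed.

Lemma asym j k : a j k = a k j.
Proof. by case: Hsg => h _; rewrite h. Qed.

Lemma d_bound i : `|d i| <= (maxdeg e)%:R.
Proof.
set q := fun j => pr i j ^+ 2 + pi i j ^+ 2.
have h : 2 * `|d i| <= \sum_j \sum_k a j k * (q j + q k).
  rewrite E5; apply: le_trans (ler_wpM2l _ (ler_norm_sum _ _ _)) _ => //.
  rewrite mulr_sumr; apply: ler_sum => j _.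
  apply: le_trans (ler_wpM2l _ (ler_norm_sum _ _ _)) _ => //.
  rewrite mulr_sumr; apply: ler_sum => k _.
  rewrite normrM normr_nat mulrCA ler_wpM2l //.
  have := @amgm2 R 1 (pr i j) (pr i k) (pi i j) (pi i k) ltr01.
  by rewrite mul1r divr1 /q addrACA.
have e2 : \sum_j \sum_k a j k * (q j + q k) = 2 * \sum_j (deg e j)%:R * q j.
  have -> : \sum_j \sum_k a j k * (q j + q k) =
      \sum_j \sum_k a j k * q j + \sum_j \sum_k a j k * q k.
    rewrite -big_split; apply: eq_bigr => j _; rewrite -big_split.
    by apply: eq_bigr => k _; rewrite mulrDr.
  have -> : \sum_j \sum_k a j k * q k = \sum_j \sum_k a j k * q j.
    rewrite exchange_big; apply: eq_bigr => j _; apply: eq_bigr => k _.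
    by rewrite asym.
  have -> : \sum_j \sum_k a j k * q j = \sum_j (deg e j)%:R * q j.
    by apply: eq_bigr => j _; rewrite deg_sum big_distrl.
  by rewrite mulr_natl mulr2n.
have e3 : \sum_j (deg e j)%:R * q j <= (maxdeg e)%:R.
  apply: (@le_trans _ _ (\sum_j (maxdeg e)%:R * q j)).
    apply: ler_sum => j _; apply: ler_wpM2r; first by rewrite /q addr_ge0 // sqr_ge0.
    exact: deg_le_max.
  by rewrite -mulr_sumr /q E3 mulr1.
move: h; rewrite e2 => h.
have : 2 * `|d i| <= 2 * (maxdeg e)%:R by apply: le_trans h _; rewrite ler_pM2l.
by rewrite ler_pM2l.
Qed.

Variable i0 : 'I_n.
Variable L : R.
Hypothesis L0 : 0 <= L.
Hypothesis HL : forall i, i != i0 -> `|d i| <= L.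
Local Notation Dl := ((maxdeg e)%:R : R).
Local Notation dl := ((mindeg e)%:R : R).

Lemma Nn_ge0 i x : 0 <= Nn i x.
Proof. by rewrite /Nn addr_ge0 // sqr_ge0. Qed.

Lemma bil_bound x y t : 0 < t ->
  2 * Q x y <= Dl * (t * Nn i0 x + Nn i0 y / t) +
               L * (t * \sum_j x j ^+ 2 + (\sum_j y j ^+ 2) / t).
Proof.
move=> t0.
have per : forall i, 2 * (d i * (Zr i x * Zr i y + Zi i x * Zi i y)) <=
    `|d i| * (t * Nn i x + Nn i y / t).
  move=> i; apply: le_trans (ler_norm _) _.
  rewrite normrM normr_nat normrM mulrCA; apply: ler_wpM2l => //.
  exact: amgm2.
have nn : forall i, 0 <= t * Nn i x + Nn i y / t.
  move=> i; apply: addr_ge0; [apply: mulr_ge0; [exact: ltW | exact: Nn_ge0] |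
    apply: divr_ge0; [exact: Nn_ge0 | exact: ltW]].
rewrite Qform mulr_sumr.
apply: le_trans (ler_sum _ (fun i _ => per i)) _.
rewrite (bigD1 i0) //=.
apply: lerD; first by apply: ler_wpM2r => //; exact: d_bound.
apply: (@le_trans _ _ (\sum_(i | i != i0) L * (t * Nn i x + Nn i y / t))).
  by apply: ler_sum => i ii0; apply: ler_wpM2r => //; exact: HL.
rewrite -mulr_sumr ler_wpM2l //.
apply: le_trans (sum_subP_le _ nn) _.
by rewrite big_split /= -mulr_sumr -mulr_suml !Pars.
Qed.

Definition one : 'I_n -> R := fun _ => 1.

Lemma gamma_bound : (Dl - L) * (n%:R - Nn i0 one) <= n%:R * (Dl - dl).
Proof.
have q1 : n%:R * dl <= Q one one.
  rewrite /Q.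
  have -> : \sum_j \sum_k one j * a j k * one k = \sum_j (deg e j)%:R.
    by apply: eq_bigr => j _; rewrite deg_sum; apply: eq_bigr => k _; rewrite /one mulr1 mul1r.
  rewrite -[n in n%:R * _]card_ord -sumr_const mulr_suml; apply: ler_sum => j _.
  by rewrite mul1r deg_ge_min.
have q2 : Q one one <= Dl * Nn i0 one + L * (n%:R - Nn i0 one).
  rewrite Qform (bigD1 i0) //=.
  have sN : n%:R - Nn i0 one = \sum_(i | i != i0) Nn i one.
    have P1 := Pars one; rewrite [X in _ = X](bigD1 i0) //= in P1.
    have -> : n%:R = \sum_j one j ^+ 2 by rewrite /one expr1n sumr_const card_ord.
    rewrite P1; ring.
  rewrite sN mulr_sumr; apply: lerD.
    apply: le_trans (ler_norm _) _; rewrite normrM (ger0_norm (Nn_ge0 _ _)) /Nn !expr2.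
    by apply: ler_wpM2r; [rewrite -!expr2 addr_ge0 // sqr_ge0 | exact: d_bound].
  apply: ler_sum => i ii0; rewrite /Nn -!expr2.
  apply: le_trans (ler_norm _) _; rewrite normrM (ger0_norm (Nn_ge0 _ _)).
  by apply: ler_wpM2r; [exact: Nn_ge0 | exact: HL].
have := le_trans q1 q2.
move=> h; rewrite -subr_ge0; rewrite -subr_ge0 in h.
have -> : n%:R * (Dl - dl) - (Dl - L) * (n%:R - Nn i0 one) =
   Dl * Nn i0 one + L * (n%:R - Nn i0 one) - n%:R * dl by ring.
exact: h.
Qed.

Definition ind (X : {set 'I_n}) : 'I_n -> R := fun j => (j \in X)%:R.

Lemma NX (X : {set 'I_n}) : (0 < n)%N -> L < Dl ->
  Nn i0 (ind X) <= 2 * #|X|%:R ^+ 2 / n%:R + 2 * #|X|%:R * ((Dl - dl) / (Dl - L)).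
Proof.
move=> n0 LD.
have nR : 0 < n%:R :> R by rewrite ltr0n.
have zr : forall (f : 'I_n -> R), \sum_j ind X j * f j = \sum_(j in X) f j.
  move=> f; rewrite [RHS]big_mkcond; apply: eq_bigr => j _.
  by rewrite /ind; case: (j \in X); rewrite ?mul1r ?mul0r.
have z1 : forall (f : 'I_n -> R), \sum_j one j * f j = \sum_j f j.
  by move=> f; apply: eq_bigr => j _; rewrite /one mul1r.
set c := Nn i0 one.
have ce : c = (\sum_j pr i0 j) ^+ 2 + (\sum_j pi i0 j) ^+ 2 by rewrite /c /Nn /Zr /Zi !z1.
have cn : (0 < #|'I_n|)%N by rewrite card_ord.
have h1 := rl (mem X) (fun j => pr i0 j) cn.
have h2 := rl (mem X) (fun j => pi i0 j) cn.
rewrite card_ord in h1 h2.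
have sq1 : \sum_j pr i0 j ^+ 2 + \sum_j pi i0 j ^+ 2 = 1 by rewrite -big_split E3.
have NXe : Nn i0 (ind X) = (\sum_(j in X) pr i0 j) ^+ 2 + (\sum_(j in X) pi i0 j) ^+ 2.
  by rewrite /Nn /Zr /Zi !zr.
have cle : c <= n%:R.
  have := Pars one; rewrite [X in _ = X](bigD1 i0) //= /one expr1n sumr_const card_ord => ->.
  rewrite lerDl; apply: sumr_ge0 => i _; exact: Nn_ge0.
have c0 : 0 <= c by exact: Nn_ge0.
set u := c / n%:R.
have u1 : u <= 1 by rewrite /u ler_pdivrMr // mul1r.
have u0 : 0 <= u by rewrite /u divr_ge0 // ltW.
have ug : 1 - u <= (Dl - dl) / (Dl - L).
  have DL : 0 < Dl - L by rewrite subr_gt0.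
  rewrite ler_pdivlMr //.
  have -> : (1 - u) * (Dl - L) = (Dl - L) * (n%:R - c) / n%:R.
    rewrite /u; field; by rewrite gt_eqF.
  rewrite ler_pdivrMr // [X in _ <= X]mulrC; exact: gamma_bound.
have T : Nn i0 (ind X) <= 2 * #|X|%:R ^+ 2 / n%:R * u + 2 * #|X|%:R * (1 - u).
  rewrite NXe.
  have -> : 2 * #|X|%:R ^+ 2 / n%:R * u + 2 * #|X|%:R * (1 - u) =
    (2 * #|X|%:R ^+ 2 * (\sum_j pr i0 j) ^+ 2 / n%:R ^+ 2 +
     2 * #|X|%:R * (\sum_j pr i0 j ^+ 2 - (\sum_j pr i0 j) ^+ 2 / n%:R)) +
    (2 * #|X|%:R ^+ 2 * (\sum_j pi i0 j) ^+ 2 / n%:R ^+ 2 +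
     2 * #|X|%:R * (\sum_j pi i0 j ^+ 2 - (\sum_j pi i0 j) ^+ 2 / n%:R)).
    rewrite /u ce -sq1; field; by rewrite gt_eqF //= sq1 oner_eq0.
  exact: lerD.
apply: le_trans T _.
apply: lerD.
  rewrite -[X in _ <= X]mulr1; apply: ler_wpM2l => //.
  apply: divr_ge0; [apply: mulr_ge0 => //; exact: sqr_ge0 | exact: ltW].
by apply: ler_wpM2l => //; rewrite mulr_ge0.
Qed.

Lemma ind_sq (X : {set 'I_n}) : \sum_j ind X j ^+ 2 = #|X|%:R.
Proof.
rewrite -sum1_card natr_sum [RHS]big_mkcond /=; apply: eq_bigr => j _.
by rewrite /ind; case: (j \in X); rewrite ?expr1n ?expr0n.
Qed.

Lemma ecountE (X Y : {set 'I_n}) :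
  Q (ind X) (ind Y) = (\sum_(x in X) #|nbh e x :&: Y|)%:R.
Proof.
rewrite natr_sum [RHS]big_mkcond /=; apply: eq_bigr => j _.
rewrite -sum1_card natr_sum [X in _ = if _ then X else _]big_mkcond /=.
rewrite /ind; case: (j \in X).
  apply: eq_bigr => k _; rewrite /nbh !inE mul1r.
  by case: (e j k); case: (k \in Y); rewrite ?mulr1 ?mulr0.
by rewrite big1 // => k _; rewrite !mul0r.
Qed.

Definition Kf (Z : {set 'I_n}) := #|Z|%:R * (Dl * (2 * #|Z|%:R / n%:R +
              2 * ((Dl - dl) / (Dl - L))) + L).

Lemma mix (X Y : {set 'I_n}) t : (0 < n)%N -> L < Dl -> 0 < t ->
  2 * (\sum_(x in X) #|nbh e x :&: Y|)%:R <= t * Kf X + Kf Y / t.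
Proof.
move=> n0 LD t0.
have D0 : 0 <= Dl by [].
rewrite -ecountE.
apply: le_trans (bil_bound _ _ t0) _.
rewrite !ind_sq.
have hX := NX X n0 LD.
have hY := NX Y n0 LD.
rewrite /Kf; set g := (Dl - dl) / (Dl - L) in hX hY *.
apply: (@le_trans _ _ (Dl * (t * (2 * #|X|%:R ^+ 2 / n%:R + 2 * #|X|%:R * g) +
     (2 * #|Y|%:R ^+ 2 / n%:R + 2 * #|Y|%:R * g) / t) +
     L * (t * #|X|%:R + #|Y|%:R / t))).
  rewrite lerD2r; apply: ler_wpM2l => //; apply: lerD.
    by apply: ler_wpM2l => //; exact: ltW.
  by apply: ler_wpM2r => //; rewrite invr_ge0 ltW.
rewrite le_eqVlt; apply/orP; left; apply/eqP.
field; by rewrite gt_eqF //= pnatr_eq0 -lt0n.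
Qed.
End Core.

Lemma graph_mix (R : realType) n (e : rel 'I_n) (s : seq R) :
  simple_graph e -> spectrum (adjmx R e) s -> (0 < n)%N ->
  lam_of n s < (maxdeg e)%:R ->
  forall (X Y : {set 'I_n}) (t : R), 0 < t ->
  2 * (\sum_(x in X) #|nbh e x :&: Y|)%:R <= t * Kf e (lam_of n s) X + Kf e (lam_of n s) Y / t.
Proof.
move=> sg [ss cp] n0 LD X Y t t0.
have At : (adjmx R e)^T = adjmx R e.
  by apply/matrixP => i j; rewrite !mxE; case: sg => h _; rewrite h.
have [pr [pi [d [E1 E2 E3 E5 Ep]]]] := real_spectral At cp.
have [i0 Hi0] := top_index n0 ss Ep.
have L0 : 0 <= lam_of n s by rewrite /lam_of le_max normr_ge0.
apply: (mix sg (pr := pr) (pi := pi) (d := d)) => //.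
- by move=> j k; rewrite -E1 mxE.
- by move=> i; rewrite E5; apply: eq_bigr => j _; apply: eq_bigr => k _; rewrite mxE.
- exact: Hi0.
Qed.

Lemma numeric (R : realFieldType) (D dl L g a m N th dd E : R) :
  0 < dl -> dl <= D -> D <= (1 + th) * dl -> 0 <= L -> L <= th * D ->
  0 <= a -> a <= th * N -> 0 <= m -> m <= N -> 0 < N -> 0 < th ->
  th * 400 <= dd ^+ 3 -> 0 < dd -> dd <= 1 -> 0 <= g -> g <= 2 * th ->
  m * (dd * dl) <= 2 * E ->
  2 * E <= (dd / 12) * (m * (D * (2 * m / N + 2 * g) + L)) +
           (a * (D * (2 * a / N + 2 * g) + L)) / (dd / 12) ->
  m <= dd * a.
Proof.
move=> dl0 dlD Dth L0 LD a0 aN m0 mN N0 th0 thd dd0 dd1 g0 g2 low up.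
have th1 : th <= 1 / 400.
  rewrite ler_pdivlMr //; apply: le_trans thd _.
  by rewrite expr_le1 // ltW.
have D2 : D <= 2 * dl by nra.
have D0 : 0 < D by lra.
have mN' : m / N <= 1 by rewrite ler_pdivrMr // mul1r.
have aN' : a / N <= th by rewrite ler_pdivrMr.
have k1 : D * (2 * m / N + 2 * g) + L <= 6 * dl.
  have : 2 * m / N + 2 * g <= 3 by rewrite -mulrA; nra.
  nra.
have k2 : D * (2 * a / N + 2 * g) + L <= 14 * th * dl.
  have : 2 * a / N + 2 * g <= 6 * th by rewrite -mulrA; nra.
  nra.
have t0 : 0 < dd / 12 by rewrite divr_gt0.
have u1 : (dd / 12) * (m * (D * (2 * m / N + 2 * g) + L)) <= m * (dd * dl) / 2.
  have : m * (D * (2 * m / N + 2 * g) + L) <= m * (6 * dl) by rewrite ler_wpM2l.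
  move=> hh; apply: le_trans (ler_wpM2l (ltW t0) hh) _.
  rewrite le_eqVlt; apply/orP; left; apply/eqP; field; by [].
have u2 : (a * (D * (2 * a / N + 2 * g) + L)) / (dd / 12) <= 168 * th * a * dl / dd.
  have : a * (D * (2 * a / N + 2 * g) + L) <= a * (14 * th * dl) by rewrite ler_wpM2l.
  move=> hh; rewrite ler_pdivrMr //.
  apply: le_trans hh _.
  rewrite le_eqVlt; apply/orP; left; apply/eqP; field; by rewrite gt_eqF.
have h1 : m * (dd * dl) / 2 <= 168 * th * a * dl / dd by lra.
have h2 : 168 * th * a * dl / dd <= 168 / 400 * (dd * dd) * a * dl.
  rewrite ler_pdivrMr //.
  have -> : 168 / 400 * (dd * dd) * a * dl * dd = 168 / 400 * (dd ^+ 3) * (a * dl) by ring.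
  have -> : 168 * th * a * dl = 168 / 400 * (th * 400) * (a * dl) by field.
  apply: ler_wpM2r; first by rewrite mulr_ge0 // ltW.
  by apply: ler_wpM2l thd; rewrite divr_ge0.
set P := dd * dl.
have P0 : 0 < P by rewrite mulr_gt0.
have h3 : m * P <= (168 / 200 * dd * a) * P.
  have := le_trans h1 h2; rewrite /P => hh. 
  have -> : 168 / 200 * dd * a * (dd * dl) = 2 * (168 / 400 * (dd * dd) * a * dl) by field.
  lra.
rewrite ler_pM2r // in h3.
apply: le_trans h3 _.
have : 0 <= dd * a by rewrite mulr_ge0 // ltW.
lra.
Qed.

Lemma mindeg_n0 n (e : rel 'I_n) : (0 < mindeg e)%N -> (0 < n)%N.
Proof.
case: n e => [|n] e //.
by rewrite /mindeg big_ord0 /maxdeg big_ord0.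
Qed.

Lemma low_bound (R : realType) n (e et : rel 'I_n) (A T : {set 'I_n}) (dd : R) :
  (forall x y, et x y -> e x y) ->
  (forall v, 2^-1 * (deg e v)%:R <= (deg et v)%:R :> R) -> 0 <= dd ->
  (forall u, u \in T -> dd < #|nbh et u :&: A|%:R / #|nbh et u|%:R) ->
  #|T|%:R * (dd * (mindeg e)%:R) <= 2 * (\sum_(x in T) #|nbh e x :&: A|)%:R.
Proof.
move=> ete hdeg dd0 hT.
have per : forall u, u \in T -> dd * (mindeg e)%:R / 2 <= (#|nbh e u :&: A|)%:R :> R.
  move=> u uT; have h := hT u uT.
  set a1 := #|nbh et u :&: A| in h; set b1 := #|nbh et u| in h.
  case: (posnP b1) => [b0|bp].
    by move: h; rewrite b0 invr0 mulr0 => /(le_lt_trans dd0); rewrite ltxx.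
  have bR : 0 < b1%:R :> R by rewrite ltr0n.
  rewrite ltr_pdivlMr // in h.
  have h1 : (mindeg e)%:R / 2 <= b1%:R :> R.
    apply: le_trans (hdeg u); rewrite mulrC ler_pM2l ?invr_gt0 //.
    exact: deg_ge_min.
  have h2 : (a1 <= #|nbh e u :&: A|)%N.
    apply: subset_leq_card; apply: setSI; apply/subsetP => y; rewrite !inE; exact: ete.
  apply: le_trans (_ : dd * b1%:R <= _).
    by rewrite -mulrA ler_wpM2l.
  apply: le_trans (ltW h) _; by rewrite ler_nat.
have : \sum_(u in T) (dd * (mindeg e)%:R / 2) <= (\sum_(x in T) #|nbh e x :&: A|)%:R :> R.
  by rewrite natr_sum; apply: ler_sum => u uT; apply: per.
move=> hh; rewrite sumr_const -mulr_natl in hh.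
have -> : #|T|%:R * (dd * (mindeg e)%:R) = 2 * (#|T|%:R * (dd * (mindeg e)%:R / 2)) by field.
rewrite ler_pM2l //; by rewrite mulr_natl; move: hh; rewrite mulr1.
Qed.

Lemma few_bad (R : realType) n (e et : rel 'I_n) (s : seq R) (A T : {set 'I_n}) (th dd : R) :
  simple_graph e -> spectrum (adjmx R e) s -> (forall x y, et x y -> e x y) ->
  (forall v, 2^-1 * (deg e v)%:R <= (deg et v)%:R :> R) ->
  (0 < mindeg e)%N -> (maxdeg e)%:R <= (1 + th) * (mindeg e)%:R ->
  lam_of n s <= th * (maxdeg e)%:R ->
  #|A|%:R <= th * n%:R -> 0 < th -> th * 400 <= dd ^+ 3 -> 0 < dd -> dd <= 1 ->
  (forall u, u \in T -> dd < #|nbh et u :&: A|%:R / #|nbh et u|%:R) ->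
  #|T|%:R <= dd * #|A|%:R.
Proof.
move=> sg sp ete hdeg dpos Dth Lth Ath th0 thd dd0 dd1 hT.
have n0 := mindeg_n0 dpos.
set D : R := (maxdeg e)%:R in Dth Lth *.
set dl : R := (mindeg e)%:R in Dth *.
set L := lam_of n s in Lth *.
have dl0 : 0 < dl by rewrite ltr0n.
have dlD : dl <= D by apply: le_trans (deg_ge_min R e (Ordinal n0)) (deg_le_max R e (Ordinal n0)).
have L0 : 0 <= L by rewrite /L /lam_of le_max normr_ge0.
have th1 : th <= 1 / 400.
  rewrite ler_pdivlMr //; apply: le_trans thd _.
  by rewrite expr_le1 // ltW.
have LD : L < D by nra.
set g := (D - dl) / (D - L).
have g0 : 0 <= g by rewrite /g divr_ge0 // subr_ge0 // ltW.
have g2 : g <= 2 * th.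
  rewrite /g ler_pdivrMr ?subr_gt0 //; nra.
have t0 : 0 < dd / 12 by rewrite divr_gt0.
have low := low_bound ete hdeg (ltW dd0) hT.
have up := graph_mix sg sp n0 LD T A t0.
rewrite /Kf -/D -/dl -/L -/g in up.
have mN : #|T|%:R <= n%:R :> R by rewrite ler_nat; apply: leq_trans (max_card _) _; rewrite card_ord.
apply: (numeric dl0 dlD Dth L0 Lth _ Ath _ mN _ th0 thd dd0 dd1 g0 g2 low up) => //.
by rewrite ltr0n.
Qed.

Lemma diag (P : nat -> nat -> Prop) : (forall n, P 0%N n) ->
  (forall k, exists N, forall n, (N <= n)%N -> P k n) ->
  exists kf : nat -> nat, (forall n, P (kf n) n) /\
    (forall K, exists N, forall n, (N <= n)%N -> (K <= kf n)%N).
Proof.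
move=> P0 HP.
have [Nf HNf] : exists Nf : nat -> nat, forall k n, (Nf k <= n)%N -> P k n.
  exists (fun k => proj1_sig (constructive_indefinite_description _ (HP k))).
  by move=> k n; case: constructive_indefinite_description => /= N HN; exact: HN.
exists (fun n => \max_(j < n.+1 | (Nf j <= n)%N) (j : nat)); split.
  move=> n; apply: (big_ind (fun k => P k n)) => //.
    by move=> x y Px Py; rewrite /maxn; case: ltnP.
  move=> j hj; exact: HNf.
move=> K; exists (maxn K (Nf K)) => n hn.
have Kn : (K < n.+1)%N by rewrite ltnS; apply: leq_trans hn; exact: leq_maxl.
have := @leq_bigmax_cond _ (fun j : 'I_n.+1 => (Nf j <= n)%N) (fun j : 'I_n.+1 => (j : nat)) (Ordinal Kn).
apply => /=; apply: leq_trans hn; exact: leq_maxr.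
Qed.

Lemma Ev (R : realType) (e et : forall n, rel 'I_n) (eps : R) (A : forall n, {set 'I_n}) :
  expander_seq R e -> 0 < eps ->
  (forall n (x y : 'I_n), et n x y -> e n x y) ->
  (forall n (v : 'I_n), (2^-1 + eps) * (deg (e n) v)%:R <= (deg (et n) v)%:R) ->
  @little_o R (fun n => (#|A n|)%:R) (fun n => n%:R : R) ->
  forall dd : R, 0 < dd -> dd <= 1 -> exists N, forall n, (N <= n)%N ->
  forall T : {set 'I_n},
   (forall u, u \in T -> dd < #|nbh (et n) u :&: A n|%:R / #|nbh (et n) u|%:R) ->
   #|T|%:R <= dd * #|A n|%:R.
Proof.
move=> [sg [_ [hr [s [hs hl]]]]] eps0 ete hdeg hA dd dd0 dd1.
set th := dd ^+ 3 / 400.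
have th0 : 0 < th by rewrite /th divr_gt0 // exprn_gt0.
have th1 : th <= 1 / 400.
  rewrite /th ler_pM2r ?invr_gt0 //; by rewrite expr_le1 // ltW.
have [N1 h1] := hr th th0.
have [N2 h2] := hl th th0.
have [N3 h3] := hA th th0.
exists (maxn N1 (maxn N2 N3)) => n hn T hT.
have [hn1 hn23] : (N1 <= n)%N /\ (maxn N2 N3 <= n)%N by apply/andP; rewrite -geq_max.
have [hn2 hn3] : (N2 <= n)%N /\ (N3 <= n)%N by apply/andP; rewrite -geq_max.
have r := h1 n hn1.
have mp : (0 < mindeg (e n))%N.
  case: (posnP (mindeg (e n))) => [m0|//].
  move: r; rewrite m0 invr0 mulr0 sub0r normrN normr1 => r.
  have : (1 : R) <= 1 / 400 by apply: le_trans r th1.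
  rewrite ler_pdivlMr // mul1r => hh; lra.
have dR : 0 < (mindeg (e n))%:R :> R by rewrite ltr0n.
have Dth : (maxdeg (e n))%:R <= (1 + th) * (mindeg (e n))%:R.
  move: r; rewrite ler_norml => /andP[_ r].
  rewrite -ler_pdivrMr //; lra.
apply: (few_bad (sg n) (hs n) (ete n) _ mp Dth (h2 n hn2) (h3 n hn3) th0 _ dd0 dd1 hT).
  move=> v; apply: le_trans (hdeg n v); apply: ler_wpM2r => //.
  by rewrite lerDl ltW.
by rewrite /th mulfVK // pnatr_eq0.
Qed.

Lemma ratio_le1 n (et : rel 'I_n) (A : {set 'I_n}) u (R : realType) :
  #|nbh et u :&: A|%:R / #|nbh et u|%:R <= (1 : R).
Proof.
case: (posnP #|nbh et u|) => [->|p]; first by rewrite invr0 mulr0.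
rewrite ler_pdivrMr ?ltr0n // mul1r ler_nat.
apply: subset_leq_card; exact: subsetIl.
Qed.

Lemma seqB (R : realType) (et : forall n, rel 'I_n) (A S : forall n, {set 'I_n}) :
  (forall dd : R, 0 < dd -> dd <= 1 -> exists N, forall n, (N <= n)%N ->
    forall T : {set 'I_n},
    (forall u, u \in T -> dd < #|nbh (et n) u :&: A n|%:R / #|nbh (et n) u|%:R) ->
    #|T|%:R <= dd * #|A n|%:R) ->
  exists f : nat -> R,
   (forall n, #|S n :\: [set u in S n |
       #|nbh (et n) u :&: A n|%:R / #|nbh (et n) u|%:R <= f n]|%:R <= f n * #|A n|%:R) /\
   (forall d : R, 0 < d -> exists N, forall n, (N <= n)%N -> f n <= d).
Proof.
move=> hE.
pose F (k : nat) : R := (k.+1%:R)^-1.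
have F0 : forall k, 0 < F k by move=> k; rewrite /F invr_gt0 ltr0n.
have F1 : forall k, F k <= 1 by move=> k; rewrite /F invf_le1 ?ltr0n // ler1n.
pose P k n := #|S n :\: [set u in S n |
       #|nbh (et n) u :&: A n|%:R / #|nbh (et n) u|%:R <= F k]|%:R <= F k * #|A n|%:R.
have P0 : forall n, P 0%N n.
  move=> n; rewrite /P.
  have -> : S n :\: [set u in S n | #|nbh (et n) u :&: A n|%:R / #|nbh (et n) u|%:R <= F 0%N] = set0.
    apply/setP => u; rewrite !inE.
    have -> : F 0%N = 1 by rewrite /F invr1.
    by rewrite ratio_le1 andbT andNb.
  by rewrite cards0 mulr_ge0 // ltW.
have PK : forall k, exists N, forall n, (N <= n)%N -> P k n.
  move=> k; have [N HN] := hE (F k) (F0 k) (F1 k).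
  exists N => n hn; apply: HN => // u; rewrite !inE => /andP[/nandP [h|h] uS].
    by rewrite uS in h.
  by rewrite ltNge.
have [kf [Pk Kf]] := diag P0 PK.
exists (fun n => F (kf n)); split; first exact: Pk.
move=> d d0.
set K := Num.Def.archi_bound d^-1.
have hK : d^-1 < K%:R by apply: archi_boundP; rewrite invr_ge0 ltW.
have [N HN] := Kf K.
exists N => n hn.
have := HN n hn => kn.
rewrite /F -[d]invrK lef_pV2 ?posrE ?ltr0n ?invr_gt0 //.
apply: le_trans (ltW hK) _; rewrite ler_nat; exact: leqW.
Qed.

Theorem lemma2p12 (R : realType) (e : forall n, rel 'I_n)
  (et : forall n, rel 'I_n) (eps : R) (A : forall n, {set 'I_n}) :
  expander_seq R e ->
  0 < eps ->
  (forall n, simple_graph (et n)) ->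
  (forall n (x y : 'I_n), et n x y -> e n x y) ->
  (forall n (v : 'I_n), (2^-1 + eps) * (deg (e n) v)%:R <= (deg (et n) v)%:R) ->
  @little_o R (fun n => (#|A n|)%:R) (fun n => n%:R : R) ->
  (* (a) *)
  (exists B : forall n, {set 'I_n},
     (forall n, B n \subset A n) /\
     (forall d : R, 0 < d -> exists N, forall n, (N <= n)%N ->
        (1 - d) * (#|A n|)%:R <= (#|B n|)%:R) /\
     (forall d : R, 0 < d -> exists N, forall n, (N <= n)%N ->
        forall u, u \in B n ->
          (#|nbh (et n) u :&: A n|)%:R / (#|nbh (et n) u|)%:R <= d))
  /\
  (* (b) *)
  (exists B : forall n, {set 'I_n},
     (forall n, B n \subset ~: A n) /\
     @little_o R (fun n => (#|~: (A n :|: B n)|)%:R) (fun n => (#|A n|)%:R) /\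
     (forall d : R, 0 < d -> exists N, forall n, (N <= n)%N ->
        forall v, v \in B n ->
          (#|nbh (et n) v :&: A n|)%:R / (#|nbh (et n) v|)%:R <= d)).
Proof.
move=> Hexp eps0 Hsg ete hdeg hA.
have hE := Ev Hexp eps0 ete hdeg hA.
split.
- have [f [Pf Ff]] := seqB A hE.
  exists (fun n => [set u in A n | #|nbh (et n) u :&: A n|%:R / #|nbh (et n) u|%:R <= f n]).
  split; [|split].
  + by move=> n; apply/subsetP => u; rewrite inE => /andP[].
  + move=> d d0; have [N HN] := Ff d d0; exists N => n hn.
    set B := [set u in A n | _].
    have BA : B \subset A n by apply/subsetP => u; rewrite inE => /andP[].
    have card : (#|A n| = #|B| + #|A n :\: B|)%N.
      by rewrite -(cardsID B (A n)) (setIidPr BA).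
    have := Pf n; rewrite -/B => hb.
    have h1 : #|A n :\: B|%:R <= d * #|A n|%:R.
      apply: le_trans hb _; apply: ler_wpM2r => //; exact: HN.
    rewrite mulrBl mul1r; set X := d * _ in h1 *.
    move: h1; rewrite card natrD => h1; lra.
  + move=> d d0; have [N HN] := Ff d d0; exists N => n hn u; rewrite inE => /andP[_ h].
    exact: le_trans h (HN n hn).
- have [f [Pf Ff]] := seqB (fun n => ~: A n) hE.
  exists (fun n => [set u in ~: A n | #|nbh (et n) u :&: A n|%:R / #|nbh (et n) u|%:R <= f n]).
  split; [|split].
  + by move=> n; apply/subsetP => u; rewrite inE => /andP[].
  + move=> d d0; have [N HN] := Ff d d0; exists N => n hn.
    rewrite setCU -setDE.
    apply: le_trans (Pf n) _; apply: ler_wpM2r => //; exact: HN.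
  + move=> d d0; have [N HN] := Ff d d0; exists N => n hn u; rewrite inE => /andP[_ h].
    exact: le_trans h (HN n hn).
Qed.
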